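(* In the two-unicast setting, suppose $k_{1-2}+k_{2-1}\ge\min(k_{12-1},k_{12-2})$ and $k_{2-1}\le k_{2-2}$. Set $R_2^{**}=k_{2-1}$ and $R_1^{**}=\min(k_{12-1},k_{12-2})-k_{2-1}$. Let the field $GF(q)$ and the local coding coefficients at the non-source nodes be fixed so that $\mathrm{rank}(H_{ij})=k_{j-i}$ and $\mathrm{rank}([H_{i1}~H_{i2}])=k_{12-i}$ for $i,j\in\{1,2\}$, and let $M_1$ ($k_{1-12}\times R_1^{**}$) and $M_2$ ($k_{2-12}\times R_2^{**}$) be full column rank source encoding matrices such that $[H_{i1}M_1~~H_{i2}M_2]$ has full column rank $R_1^{**}+R_2^{**}$ for $i=1,2$. Then every pair of nonnegative integers $(R_1,R_2)$ with $$R_1\le\min(k_{12-1},k_{12-2})-k_{2-1},\qquad R_2\le k_{2-2},\qquad R_1+R_2\le\mathrm{rank}([H_{21}M_1~~H_{22}])$$ is achievable.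
   Context: $G=(V,E)$ is a directed acyclic network with unit-capacity edges (each carrying one symbol of $GF(q)$ per use), sources $s_1,s_2$ (no incoming edges), terminals $t_1,t_2$ (no outgoing edges); $t_i$ wants the message of $s_i$. $k_{N_1-N_2}$ is the min-cut from $\{s_i:i\in N_1\}$ to $\{t_j:j\in N_2\}$. W.l.o.g. $s_i$ has exactly $k_{i-12}$ outgoing edges and $t_i$ has exactly $k_{12-i}$ incoming edges. For a linear network code over $GF(q)$ with fixed local coefficients at non-source nodes, $H_{ij}$ is the $k_{12-i}\times k_{j-12}$ matrix such that the vector of symbols on the incoming edges of $t_i$ equals $H_{i1}Y_1+H_{i2}Y_2$, where $Y_j$ is the vector of symbols on the outgoing edges of $s_j$; the source encoding is $Y_j=M_jU_j$ with $U_j$ the message vector of $s_j$. $(R_1,R_2)$ is achievable if for some finite field $GF(q)$ there is a linear network code such that, when $s_i$ observes $R_i$ independent symbols of $GF(q)$, $t_1$ uniquely recovers $s_1$'s message and $t_2$ uniquely recovers $s_2$'s message. *)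

(* Defs.v *)
From HB Require Import structures.
From mathcomp Require Import all_boot all_order all_algebra.
Set Implicit Arguments. Unset Strict Implicit. Unset Printing Implicit Defensive.
Import GRing.Theory.
Local Open Scope ring_scope.

Section Network.
(* A network: finite node type V, finite edge type E (multi-edges allowed),
   each edge e goes from node [tail e] to node [head e]; unit capacity. *)
Variables (V E : finType) (tail head : E -> V).

Definition out_edges (v : V) : {set E} := [set e | tail e == v].
Definition in_edges (v : V) : {set E} := [set e | head e == v].

Definition adj_minus (C : {set E}) : rel V :=
  fun u w => [exists e, [&& e \notin C, tail e == u & head e == w]].

Definition acyclic : Prop :=
  forall e : E, ~~ connect (adj_minus set0) (head e) (tail e).

Definition separates (C : {set E}) (S T : {set V}) : bool :=
  [forall s in S, forall t in T, ~~ connect (adj_minus C) s t].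

(* min-cut from S to T (number of edges); #|E| is only the neutral element
   of minn, never reached below #|E| itself since setT is always a cut when
   S and T are disjoint. *)
Definition mincut (S T : {set V}) : nat :=
  \big[minn/#|E|]_(C : {set E} | separates C S T) #|C|.

Variable F : fieldType.
(* local coding coefficients: beta e' e is the coefficient of the symbol on
   edge e' (entering tail e) in the symbol sent on edge e *)
Variable beta : E -> E -> F.
Variables (s1 s2 : V).

Definition src_val (A : {set E}) (y : 'cV[F]_#|A|) (e : E) : F :=
  \sum_(i < #|A|) (if @enum_val E (mem A) i == e then y i 0 else 0).

Definition code_step (y1 : 'cV[F]_#|out_edges s1|) (y2 : 'cV[F]_#|out_edges s2|)
  (f : E -> F) (e : E) : F :=
  if tail e == s1 then src_val y1 e
  else if tail e == s2 then src_val y2 e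
  else \sum_(e' | head e' == tail e) beta e' e * f e'.

(* symbols carried by all edges when the sources emit Y1, Y2 (the recursion
   stabilizes after #|E| rounds in an acyclic network) *)
Definition edge_symbols y1 y2 : E -> F :=
  iter #|E| (code_step y1 y2) (fun _ => 0).

Definition received (t : V) y1 y2 : 'cV[F]_#|in_edges t| :=
  \col_(a < #|in_edges t|) edge_symbols y1 y2 (@enum_val E (mem (in_edges t)) a).

End Network.

Arguments out_edges {V E} tail v.
Arguments in_edges {V E} head v.
Arguments adj_minus {V E} tail head C _ _.
Arguments acyclic {V E} tail head.
Arguments separates {V E} tail head C S T.
Arguments mincut {V E} tail head S T.
Arguments received {V E} tail head {F} beta s1 s2 t y1 y2.

Definition achievable (V E : finType) (tail head : E -> V) (s1 s2 t1 t2 : V)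
  (R1 R2 : nat) : Prop :=
  exists (F : finFieldType) (beta : E -> E -> F)
    (M1 : 'M[F]_(#|out_edges tail s1|, R1)) (M2 : 'M[F]_(#|out_edges tail s2|, R2)),
    (forall (U1 U1' : 'cV[F]_R1) (U2 U2' : 'cV[F]_R2),
        received tail head beta s1 s2 t1 (M1 *m U1) (M2 *m U2)
        = received tail head beta s1 s2 t1 (M1 *m U1') (M2 *m U2') -> U1 = U1') /\
    (forall (U1 U1' : 'cV[F]_R1) (U2 U2' : 'cV[F]_R2),
        received tail head beta s1 s2 t2 (M1 *m U1) (M2 *m U2)
        = received tail head beta s1 s2 t2 (M1 *m U1') (M2 *m U2') -> U2 = U2').

(* Main.v *)
Require Import Defs.
From HB Require Import structures.
From mathcomp Require Import all_boot all_order all_algebra.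
From mathcomp Require Import zify.
Import GRing.Theory.
Local Open Scope ring_scope.

Set Implicit Arguments. Unset Strict Implicit.

Lemma chooseP (F : fieldType) m (L : 'M[F]_m) R1 : (R1 <= m)%N ->
  exists P : 'M[F]_(R1, m), row_free P /\
     (\rank (P :&: L) <= R1 - (m - \rank L))%N.
Proof.
move=> hR.
pose B1 := row_base (L^C)%MS. pose B2 := row_base L.
have rC := mxrank_compl L.
have rL : (\rank L <= m)%N by apply: rank_leq_col.
have B1L : (B1 :&: L)%MS = 0.
  apply/eqP; rewrite -submx0 -(capmx_compl L).
  by rewrite sub_capmx capmxSr /= (submx_trans (capmxSl _ _)) // eq_row_base.
case: (leqP R1 (\rank L^C)) => hc.
  exists ((pid_mx R1 : 'M_(R1, \rank L^C)) *m B1); split.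
    by rewrite /row_free mxrankMfree ?row_base_free // rank_pid_mx.
  suff -> : ((pid_mx R1 : 'M_(R1, \rank L^C)) *m B1 :&: L)%MS = 0 by rewrite mxrank0.
  apply/eqP; rewrite -submx0 -B1L.
  by rewrite sub_capmx capmxSr andbT (submx_trans (capmxSl _ _)) // submxMl.
set a := \rank L^C in hc *.
have eR : R1 = (a + (R1 - a))%N by lia.
have hd : (R1 - a <= \rank L)%N by lia.
move: hd; set d := (R1 - a)%N => hd.
rewrite eR.
pose Q := col_mx B1 ((pid_mx d : 'M_(d, \rank L)) *m B2).
have rB1 : \rank B1 = a by rewrite eq_row_base.
have rPB2 : \rank ((pid_mx d : 'M_(d, \rank L)) *m B2) = d.
  by rewrite mxrankMfree ?row_base_free // rank_pid_mx.
have capQ : (B1 :&: (pid_mx d : 'M_(d, \rank L)) *m B2)%MS = 0.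
  apply/eqP; rewrite -submx0 -B1L.
  rewrite sub_capmx capmxSl /= (submx_trans (capmxSr _ _)) //.
  by rewrite mulmx_sub // eq_row_base.
have rQ : \rank Q = (a + d)%N.
  rewrite /Q -addsmxE.
  have := mxrank_sum_cap B1 ((pid_mx d : 'M_(d, \rank L)) *m B2).
  by rewrite capQ mxrank0 rB1 rPB2 addn0.
exists Q; split; first by rewrite /row_free rQ.
have CQ : (L^C + L <= Q + L)%MS.
  apply: addsmxS => //. by rewrite -(eq_row_base (L^C)%MS) -/B1 /Q -addsmxE addsmxSl.
have rf := addsmx_compl_full L.
have rCL : \rank (L^C + L)%MS = m.
  by rewrite addsmxC; apply/eqP.
have := mxrankS CQ; rewrite rCL => hQL.
have := mxrank_sum_cap Q L; rewrite rQ.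
have := mxrank_compl L; rewrite -/a.
move=> h1 h2. have ed : d = (R1 - a)%N by []. move: h1 h2 ed hQL hc rL. clear. move: (\rank (Q + L)) (\rank (Q :&: L)) => x y. rewrite /d. lia.
Qed.
Lemma chooseN (F : fieldType) n k p R2 (Y : 'M[F]_(n,k)) (D : 'M[F]_(p,k)) :
  (\rank D + R2 <= \rank Y)%N ->
  exists N : 'M[F]_(R2, n), forall v : 'rV_R2, (v *m N *m Y <= D)%MS -> v = 0.
Proof.
move=> hD.
pose Z := (Y :\: D)%MS.
have rZ : (R2 <= \rank Z)%N.
  have := mxrank_cap_compl Y D.
  have := mxrankS (capmxSr Y D).
  rewrite -/Z; lia.
pose T := (pid_mx R2 : 'M_(R2, \rank Z)) *m row_base Z.
have fT : row_free T.
  by rewrite /row_free /T mxrankMfree ?row_base_free // rank_pid_mx.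
have TZ : (T <= Z)%MS by rewrite /T mulmx_sub // eq_row_base.
have TY : (T <= Y)%MS by apply: submx_trans TZ (diffmxSl _ _).
exists (T *m pinvmx Y) => v hv.
rewrite -mulmxA (mulmxKpV TY) in hv.
have : (v *m T <= Z :&: D)%MS by rewrite sub_capmx hv mulmx_sub.
rewrite capmx_diff submx0 => /eqP h.
by apply: (row_free_inj fT); rewrite h mul0mx.
Qed.

Lemma core (F : fieldType) m n k R1 R2 (X : 'M[F]_(m,k)) (Y : 'M[F]_(n,k)) :
  (R1 <= m)%N -> (R2 <= \rank Y)%N -> (R1 + R2 <= \rank (col_mx X Y))%N ->
  exists P : 'M[F]_(R1, m), exists N : 'M[F]_(R2, n), row_free P /\
    forall (u : 'rV_R1) (v : 'rV_R2), u *m P *m X + v *m N *m Y = 0 -> v = 0.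
Proof.
move=> h1 h2 h3.
pose C := cokermx Y. pose L := kermx (X *m C).
have eK : (kermx C :=: Y)%MS.
  apply/eqmxP; apply/andP; split.
    by rewrite submxE mulmx_ker.
  by rewrite sub_kermx mulmx_coker.
have rL := mxrank_ker (X *m C).
have rXC := mxrank_mul_ker X C.
have ecap : \rank (X :&: kermx C)%MS = \rank (X :&: Y)%MS.
  by rewrite (cap_eqmx (eqmx_refl X) eK).
have rsum := mxrank_sum_cap X Y.
rewrite -addsmxE in h3.
have rXCm : (\rank (X *m C) <= m)%N by apply: rank_leq_row.
have [P [fP hP]] := chooseP L h1.
pose D := ((P :&: L)%MS *m X).
have rD : (\rank D <= \rank (P :&: L)%MS)%N by apply: mxrankM_maxl.
have [N hN] : exists N : 'M[F]_(R2, n), forall v : 'rV_R2, (v *m N *m Y <= D)%MS -> v = 0.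
  apply: chooseN.
  rewrite -/L in rL.
  move: rD hP rL rXC ecap rsum h3 h2 rXCm.
  move: (\rank D) (\rank (P :&: L)%MS) (\rank L) (\rank (X *m C)) (\rank (X :&: kermx C)%MS)
        (\rank (X :&: Y)%MS) (\rank (X + Y)%MS) (\rank X) (\rank Y).
  move=> *; lia.
exists P, N; split => // u v e.
apply: hN.
have ew : v *m N *m Y = (- (u *m P)) *m X.
  by rewrite mulNmx; apply/eqP; rewrite -addr_eq0 addrC e.
have zL : (- (u *m P) <= L)%MS.
  rewrite sub_kermx mulmxA -ew.
  by rewrite -submxE submxMl.
have zP : (- (u *m P) <= P)%MS by rewrite -mulNmx submxMl.
by rewrite ew submxMr // sub_capmx zP zL.
Qed.

Lemma lin_diff (F : fieldType) k a b (A : 'M[F]_(k,a)) (B : 'M[F]_(k,b)) x x' y y' :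
  A *m x + B *m y = A *m x' + B *m y' -> A *m (x - x') + B *m (y - y') = 0 :> 'cV_k.
Proof. by move=> e; rewrite !mulmxBr addrACA -opprD e subrr. Qed.

Lemma tr_eq (F : fieldType) k a b r s (A : 'M[F]_(k,a)) (B : 'M[F]_(k,b))
   (P : 'M[F]_(r,a)) (N : 'M[F]_(s,b)) (x : 'cV[F]_r) (y : 'cV[F]_s) :
  A *m (P^T *m x) + B *m (N^T *m y) = 0 ->
  x^T *m P *m A^T + y^T *m N *m B^T = 0.
Proof.
move=> e; have := congr1 trmx e.
by rewrite linearD /= !trmx_mul !trmxK trmx0 ?mulmxA.
Qed.

Lemma dec2 (F : fieldType) k n1 n2 m R1 R2 (H21 : 'M[F]_(k,n1)) (H22 : 'M[F]_(k,n2))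
  (M1 : 'M[F]_(n1,m)) (P : 'M[F]_(R1,m)) (N : 'M[F]_(R2,n2)) :
  (forall (u : 'rV[F]_R1) (v : 'rV[F]_R2), u *m P *m (H21 *m M1)^T + v *m N *m H22^T = 0 -> v = 0) ->
  forall (U1 U1' : 'cV[F]_R1) (U2 U2' : 'cV[F]_R2), H21 *m (M1 *m P^T *m U1) + H22 *m (N^T *m U2)
     = H21 *m (M1 *m P^T *m U1') + H22 *m (N^T *m U2') -> U2 = U2'.
Proof.
move=> h U1 U1' U2 U2' /lin_diff.
rewrite -!mulmxA -!mulmxBr (mulmxA H21) => /tr_eq /h /eqP.
rewrite -trmx0 (inj_eq trmx_inj) => /eqP hh; by apply/eqP; rewrite -subr_eq0 hh.
Qed.

Lemma dec1 (F : fieldType) k n1 n2 m m2 R1 R2 (H11 : 'M[F]_(k,n1)) (H12 : 'M[F]_(k,n2))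
  (M1 : 'M[F]_(n1,m)) (M2 : 'M[F]_(n2,m2)) (P : 'M[F]_(R1,m)) (N : 'M[F]_(R2,n2)) :
  row_free P -> \rank (row_mx (H11 *m M1) (H12 *m M2)) = (m + m2)%N ->
  (\rank H12 <= m2)%N ->
  forall (U1 U1' : 'cV[F]_R1) (U2 U2' : 'cV[F]_R2), H11 *m (M1 *m P^T *m U1) + H12 *m (N^T *m U2)
     = H11 *m (M1 *m P^T *m U1') + H12 *m (N^T *m U2') -> U1 = U1'.
Proof.
move=> fP hr h12 U1 U1' U2 U2' /lin_diff.
rewrite -!mulmxA -!mulmxBr (mulmxA H11) => /tr_eq.
move=> e; set x := U1 - U1' in e *; set y := U2 - U2' in e.
suff : x^T = 0.
  move/eqP; rewrite -trmx0 (inj_eq trmx_inj) => /eqP hh.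
  by apply/eqP; rewrite -subr_eq0; apply/eqP; exact: hh.
pose X1 := (H11 *m M1)^T. pose Y1 := (H12 *m M2)^T. pose Z := H12^T.
have rc : \rank (col_mx X1 Y1) = (m + m2)%N by rewrite -tr_row_mx mxrank_tr.
have sYZ : (Y1 <= Z)%MS by rewrite /Y1 trmx_mul submxMl.
have rY1 : (m2 <= \rank Y1)%N.
  have := mxrank_sum_cap X1 Y1; rewrite addsmxE rc.
  have := rank_leq_row X1; lia.
have sZY : (Z <= Y1)%MS.
  rewrite -(mxrank_leqif_sup sYZ).2 eqn_leq mxrankS //=.
  by rewrite /Z mxrank_tr; lia.
have fc : row_free (col_mx X1 Y1) by rewrite /row_free rc.
pose w := y^T *m N *m Z.
have ew : w *m pinvmx Y1 *m Y1 = w by rewrite mulmxKpV // (submx_trans (submxMl _ _) sZY).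
have : row_mx (x^T *m P) (w *m pinvmx Y1) *m col_mx X1 Y1 = 0.
  by rewrite mul_row_col ew.
rewrite -(mul0mx _ (col_mx X1 Y1)) => /(row_free_inj fc).
rewrite -row_mx0 => /eq_row_mx [h _].
by apply: (row_free_inj fP); rewrite h mul0mx.
Qed.

Unset Implicit Arguments. Set Strict Implicit.

Theorem corollary1 (V E : finType) (tail head : E -> V) (s1 s2 t1 t2 : V)
  (* the two-unicast network *)
  (hacyc : acyclic tail head)
  (hdist : uniq [:: s1; s2; t1; t2])
  (hs1 : in_edges head s1 = set0) (hs2 : in_edges head s2 = set0)
  (ht1 : out_edges tail t1 = set0) (ht2 : out_edges tail t2 = set0)
  (hout1 : #|out_edges tail s1| = mincut tail head [set s1] [set t1; t2])
  (hout2 : #|out_edges tail s2| = mincut tail head [set s2] [set t1; t2])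
  (hin1 : #|in_edges head t1| = mincut tail head [set s1; s2] [set t1])
  (hin2 : #|in_edges head t2| = mincut tail head [set s1; s2] [set t2])
  (* conditions on the min-cuts *)
  (hk1 : (minn (mincut tail head [set s1; s2] [set t1])
               (mincut tail head [set s1; s2] [set t2])
          <= mincut tail head [set s1] [set t2] + mincut tail head [set s2] [set t1])%N)
  (hk2 : (mincut tail head [set s2] [set t1] <= mincut tail head [set s2] [set t2])%N)
  (* fixed field and local coefficients *)
  (F : finFieldType) (beta : E -> E -> F)
  (H11 : 'M[F]_(#|in_edges head t1|, #|out_edges tail s1|))
  (H12 : 'M[F]_(#|in_edges head t1|, #|out_edges tail s2|))
  (H21 : 'M[F]_(#|in_edges head t2|, #|out_edges tail s1|))
  (H22 : 'M[F]_(#|in_edges head t2|, #|out_edges tail s2|))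
  (hH1 : forall Y1 Y2, received tail head beta s1 s2 t1 Y1 Y2 = H11 *m Y1 + H12 *m Y2)
  (hH2 : forall Y1 Y2, received tail head beta s1 s2 t2 Y1 Y2 = H21 *m Y1 + H22 *m Y2)
  (hr11 : \rank H11 = mincut tail head [set s1] [set t1])
  (hr12 : \rank H12 = mincut tail head [set s2] [set t1])
  (hr21 : \rank H21 = mincut tail head [set s1] [set t2])
  (hr22 : \rank H22 = mincut tail head [set s2] [set t2])
  (hr1 : \rank (row_mx H11 H12) = mincut tail head [set s1; s2] [set t1])
  (hr2 : \rank (row_mx H21 H22) = mincut tail head [set s1; s2] [set t2])
  (* source encoding matrices for the rates R1ss, R2ss *)
  (M1 : 'M[F]_(#|out_edges tail s1|,
               minn (mincut tail head [set s1; s2] [set t1])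
                    (mincut tail head [set s1; s2] [set t2])
               - mincut tail head [set s2] [set t1]))
  (M2 : 'M[F]_(#|out_edges tail s2|, mincut tail head [set s2] [set t1]))
  (hM1 : \rank M1 = (minn (mincut tail head [set s1; s2] [set t1])
                          (mincut tail head [set s1; s2] [set t2])
                     - mincut tail head [set s2] [set t1])%N)
  (hM2 : \rank M2 = mincut tail head [set s2] [set t1])
  (hM12_1 : \rank (row_mx (H11 *m M1) (H12 *m M2))
            = (minn (mincut tail head [set s1; s2] [set t1])
                    (mincut tail head [set s1; s2] [set t2])
               - mincut tail head [set s2] [set t1]
               + mincut tail head [set s2] [set t1])%N)
  (hM12_2 : \rank (row_mx (H21 *m M1) (H22 *m M2))
            = (minn (mincut tail head [set s1; s2] [set t1])
                    (mincut tail head [set s1; s2] [set t2])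
               - mincut tail head [set s2] [set t1]
               + mincut tail head [set s2] [set t1])%N) :
  forall R1 R2 : nat,
    (R1 <= minn (mincut tail head [set s1; s2] [set t1])
                (mincut tail head [set s1; s2] [set t2])
           - mincut tail head [set s2] [set t1])%N ->
    (R2 <= mincut tail head [set s2] [set t2])%N ->
    (R1 + R2 <= \rank (row_mx (H21 *m M1) H22))%N ->
    achievable tail head s1 s2 t1 t2 R1 R2.
Proof.
move=> R1 R2 hR1 hR2 hR3.
have hY : (R2 <= \rank H22^T)%N by rewrite mxrank_tr hr22.
have hXY : (R1 + R2 <= \rank (col_mx (H21 *m M1)^T H22^T))%N.
  by rewrite -tr_row_mx mxrank_tr.
have [P [N [fP hPN]]] := core hR1 hY hXY.
exists F, beta, (M1 *m P^T), N^T; split => U1 U1' U2 U2'.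
  rewrite !hH1. have h12 : (\rank H12 <= mincut tail head [set s2] [set t1])%N by rewrite hr12.
  move: U1 U1' U2 U2'. exact: (@dec1 F _ _ _ _ _ R1 R2 H11 H12 M1 M2 P N fP hM12_1 h12).
rewrite !hH2. move: U1 U1' U2 U2'. exact: (@dec2 F _ _ _ _ R1 R2 H21 H22 M1 P N hPN).
Qed.
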